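(* Let $\phi:\mathbb{R}^{n\times n}\to\mathbb{R}$ be differentiable and $L$-gradient Lipschitz, and let $M^\star=\arg\min\phi$ satisfy $M^\star\succeq0$. Let $f(X)=\phi(XX^T)$. Then for all $X,V\in\mathbb{R}^{n\times r}$ and $\eta\ge0$ with $\lambda_{\min}(X^TX)+\eta>0$, \[ f(X+V)\le f(X)+\langle\nabla f(X),V\rangle+\frac{\ell_{X,\eta}}2\|V\|_{X,\eta}^2, \] where \[ \ell_{X,\eta}=L\left[4+\frac{2\|XX^T-M^\star\|_F+4\|V\|_{X,\eta}}{\lambda_{\min}(X^TX)+\eta}+\left(\frac{\|V\|_{X,\eta}}{\lambda_{\min}(X^TX)+\eta}\right)^2\right]. \]
   Context: $\phi$ is $L$-gradient Lipschitz if $\|\nabla\phi(M+E)-\nabla\phi(M)\|_F\le L\|E\|_F$ for all $M,E$. The local norm is $\|V\|_{X,\eta}=\|V(X^TX+\eta I)^{1/2}\|_F$. $\langle A,B\rangle=\operatorname{tr}(A^TB)$. *)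

(* Defs.v *)
From HB Require Import structures.
From mathcomp Require Import all_boot all_order all_algebra.
From mathcomp Require Import all_classical all_reals all_analysis.
Set Implicit Arguments. Unset Strict Implicit. Unset Printing Implicit Defensive.
Import Order.TTheory GRing.Theory Num.Theory.
Import numFieldNormedType.Exports.
Local Open Scope ring_scope.

Definition frob_inner (R : realType) (m n : nat) (A B : 'M[R]_(m, n)) : R :=
  \tr (A^T *m B).

Definition frob (R : realType) (m n : nat) (A : 'M[R]_(m, n)) : R :=
  Num.sqrt (\sum_(i < m) \sum_(j < n) A i j ^+ 2).

Definition grad (R : realType) (m n : nat) (f : 'M[R]_(m, n) -> R)
  (X : 'M[R]_(m, n)) : 'M[R]_(m, n) :=
  \matrix_(i < m, j < n) 'D_(delta_mx i j) f X.

Definition psd (R : realType) (n : nat) (M : 'M[R]_n) : Prop :=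
  M^T = M /\ forall x : 'cV[R]_n, 0 <= (x^T *m M *m x) 0 0.

Definition is_lambda_min (R : realType) (n : nat) (A : 'M[R]_n) (lam : R) : Prop :=
  eigenvalue A lam /\ forall b : R, eigenvalue A b -> lam <= b.

(* Main.v *)
Require Import Defs.
From HB Require Import structures.
From mathcomp Require Import all_boot all_order all_algebra.
From mathcomp Require Import all_classical all_reals all_analysis.
Import Order.TTheory GRing.Theory Num.Theory.
Import numFieldNormedType.Exports.
Local Open Scope ring_scope.
From mathcomp Require Import ring lra.

Set Implicit Arguments. Unset Strict Implicit.
Local Open Scope classical_set_scope.

Lemma CS_fin (R : realType) (I : finType) (a b : I -> R) :
  (\sum_i a i * b i) ^+ 2 <= (\sum_i a i ^+ 2) * (\sum_i b i ^+ 2).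
Proof.
have H : 0 <= \sum_i \sum_j (a i * b j - a j * b i) ^+ 2.
  by apply: sumr_ge0 => i _; apply: sumr_ge0 => j _; exact: sqr_ge0.
have S1 : \sum_i \sum_j a i ^+ 2 * b j ^+ 2 = (\sum_i a i ^+ 2) * (\sum_i b i ^+ 2).
  by rewrite big_distrl; apply: eq_bigr => i _; rewrite big_distrr.
have S2 : \sum_i \sum_j a j ^+ 2 * b i ^+ 2 = (\sum_i a i ^+ 2) * (\sum_i b i ^+ 2).
  rewrite exchange_big /=; exact: S1.
have S3 : \sum_i \sum_j (a i * b i) * (a j * b j) = (\sum_i a i * b i) ^+ 2.
  by rewrite expr2 big_distrl; apply: eq_bigr => i _; rewrite big_distrr.
have E : \sum_i \sum_j (a i * b j - a j * b i) ^+ 2 =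
   \sum_i \sum_j (a i ^+ 2 * b j ^+ 2 + a j ^+ 2 * b i ^+ 2 - 2 * ((a i * b i) * (a j * b j))).
  by apply: eq_bigr => i _; apply: eq_bigr => j _; ring.
rewrite E in H.
have E2 : \sum_i \sum_j (a i ^+ 2 * b j ^+ 2 + a j ^+ 2 * b i ^+ 2 - 2 * ((a i * b i) * (a j * b j)))
  = \sum_i \sum_j a i ^+ 2 * b j ^+ 2 + \sum_i \sum_j a j ^+ 2 * b i ^+ 2
     - 2 * \sum_i \sum_j (a i * b i) * (a j * b j).
  rewrite big_distrr /= -big_split /= -sumrB; apply: eq_bigr => i _.
  by rewrite big_distrr /= -big_split /= -sumrB.
rewrite E2 S1 S2 S3 in H; lra.
Qed.

Definition fs (R : realType) (m n : nat) (A : 'M[R]_(m, n)) : R :=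
  \sum_(i < m) \sum_(j < n) A i j ^+ 2.

Lemma fs_ge0 (R : realType) m n (A : 'M[R]_(m, n)) : 0 <= fs A.
Proof. by apply: sumr_ge0 => i _; apply: sumr_ge0 => j _; exact: sqr_ge0. Qed.

Lemma frob_ge0 (R : realType) m n (A : 'M[R]_(m, n)) : 0 <= frob A.
Proof. exact: sqrtr_ge0. Qed.

Lemma frob_sq (R : realType) m n (A : 'M[R]_(m, n)) : frob A ^+ 2 = fs A.
Proof. by rewrite /frob sqr_sqrtr //; exact: fs_ge0. Qed.

Lemma frobE (R : realType) m n (A : 'M[R]_(m, n)) : frob A = Num.sqrt (fs A).
Proof. by []. Qed.

Lemma abs_le_sq (R : realType) (x y : R) : 0 <= y -> x ^+ 2 <= y ^+ 2 -> `|x| <= y.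
Proof.
move=> y0 h; rewrite -sqrtr_sqr -[y](@ger0_norm _ y) // -sqrtr_sqr.
by rewrite ler_sqrt // sqr_ge0.
Qed.

Lemma inner_sum (R : realType) m n (A B : 'M[R]_(m, n)) :
  frob_inner A B = \sum_i \sum_j A i j * B i j.
Proof.
rewrite /frob_inner /mxtrace exchange_big /=; apply: eq_bigr => j _.
by rewrite !mxE; apply: eq_bigr => i _; rewrite !mxE.
Qed.

Lemma CS2 (R : realType) m n (a b : 'M[R]_(m, n)) :
  (\sum_i \sum_j a i j * b i j) ^+ 2 <= fs a * fs b.
Proof.
rewrite /fs !pair_big /=.
have := (@CS_fin _ _ (fun p : 'I_m * 'I_n => a p.1 p.2) (fun p => b p.1 p.2)); exact.
Qed.

Lemma inner_abs (R : realType) m n (A B : 'M[R]_(m, n)) :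
  `|frob_inner A B| <= frob A * frob B.
Proof.
apply: abs_le_sq; first by rewrite mulr_ge0 // frob_ge0.
by rewrite exprMn !frob_sq inner_sum CS2.
Qed.

Lemma inner_le (R : realType) m n (A B : 'M[R]_(m, n)) :
  frob_inner A B <= frob A * frob B.
Proof. exact: le_trans (ler_norm _) (inner_abs _ _). Qed.

Lemma fsD (R : realType) m n (A B : 'M[R]_(m, n)) :
  fs (A + B) = fs A + 2 * frob_inner A B + fs B.
Proof.
rewrite inner_sum /fs big_distrr /= -!big_split; apply: eq_bigr => i _ /=.
rewrite big_distrr /= -!big_split; apply: eq_bigr => j _ /=.
rewrite mxE; ring.
Qed.

Lemma frob_add (R : realType) m n (A B : 'M[R]_(m, n)) :
  frob (A + B) <= frob A + frob B.
Proof.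
rewrite -[frob (A + B)]ger0_norm ?frob_ge0 //.
apply: abs_le_sq; first by rewrite addr_ge0 ?frob_ge0.
rewrite frob_sq fsD sqrrD !frob_sq.
have := inner_le A B; lra.
Qed.

Lemma fs_tr (R : realType) m n (A : 'M[R]_(m, n)) : fs A^T = fs A.
Proof.
by rewrite /fs exchange_big; apply: eq_bigr => i _; apply: eq_bigr => j _; rewrite mxE.
Qed.

Lemma frob_tr (R : realType) m n (A : 'M[R]_(m, n)) : frob A^T = frob A.
Proof. by rewrite !frobE fs_tr. Qed.

Lemma fsZ (R : realType) m n (c : R) (A : 'M[R]_(m, n)) : fs (c *: A) = c ^+ 2 * fs A.
Proof.
rewrite /fs big_distrr; apply: eq_bigr => i _; rewrite big_distrr; apply: eq_bigr => j _.
by rewrite mxE exprMn.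
Qed.

Lemma frobZ (R : realType) m n (c : R) (A : 'M[R]_(m, n)) : frob (c *: A) = `|c| * frob A.
Proof. by rewrite !frobE fsZ sqrtrM ?sqr_ge0 // sqrtr_sqr. Qed.

Lemma frobN (R : realType) m n (A : 'M[R]_(m, n)) : frob (- A) = frob A.
Proof. by rewrite -scaleN1r frobZ normrN normr1 mul1r. Qed.

Lemma fs_mul (R : realType) m n p (A : 'M[R]_(m, n)) (B : 'M[R]_(n, p)) :
  fs (A *m B) <= fs A * fs B.
Proof.
rewrite /fs big_distrl /=; apply: ler_sum => i _.
rewrite [X in _ <= _ * X]exchange_big /= big_distrr /=.
apply: ler_sum => j _; rewrite mxE.
exact: (@CS_fin _ _ (fun k => A i k) (fun k => B k j)).
Qed.

Lemma frob_mul (R : realType) m n p (A : 'M[R]_(m, n)) (B : 'M[R]_(n, p)) :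
  frob (A *m B) <= frob A * frob B.
Proof.
by rewrite !frobE -sqrtrM ?fs_ge0 // ler_sqrt ?mulr_ge0 ?fs_ge0 // fs_mul.
Qed.

Lemma fs_trace (R : realType) m n (A : 'M[R]_(m, n)) : fs A = \tr (A *m A^T).
Proof.
rewrite /fs /mxtrace; apply: eq_bigr => i _; rewrite mxE; apply: eq_bigr => j _.
by rewrite mxE expr2.
Qed.

Lemma diff_inner (R : realType) m n (f : 'M[R]_(m, n) -> R) X V :
  differentiable f X -> frob_inner (grad f X) V = 'd f X V.
Proof.
move=> df; rewrite inner_sum {2}(matrix_sum_delta V) linear_sum /=.
apply: eq_bigr => i _; rewrite linear_sum; apply: eq_bigr => j _ /=.
rewrite linearZ /= mxE -deriveE // mulrC.
by [].
Qed.

Lemma line_fun (R : realType) (V W : normedModType R) (f : V -> W) x v (t : R) :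
  (fun h : R => h^-1 *: (((fun s : R => f (s *: v + x)) \o shift t) (h *: 1) - f (t *: v + x)))
  = (fun h => h^-1 *: ((f \o shift (t *: v + x)) (h *: v) - f (t *: v + x))).
Proof.
apply: funext => h /=; rewrite /shift [h *: 1]mulr1 scalerDl addrA //.
Qed.

Lemma D_line (R : realType) (V W : normedModType R) (f : V -> W) x v (t : R) :
  'D_v f (t *: v + x) = 'D_1 (fun s : R => f (s *: v + x)) t.
Proof. by rewrite /derive line_fun. Qed.

Lemma derivable_line (R : realType) (V W : normedModType R) (f : V -> W) x v (t : R) :
  derivable f (t *: v + x) v -> derivable (fun s : R => f (s *: v + x)) t 1.
Proof. by rewrite /derivable line_fun. Qed.

Lemma chain_D (R : realType) (W : normedModType R) (phi : W -> R) (c : R -> W) t :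
  derivable c t 1 -> differentiable phi (c t) ->
  'D_1 (phi \o c) t = 'd phi (c t) ('D_1 c t).
Proof.
move=> dc dphi; have dc' : differentiable c t by apply/derivable1_diffP.
rewrite deriveE; last exact: differentiable_comp.
by rewrite diff_comp // (deriveE _ dc').
Qed.

Lemma trmx_lin (R : realType) n r (s : R) (H X : 'M[R]_(n, r)) :
  (s *: H + X)^T = s *: H^T + X^T.
Proof. by apply/matrixP => i j; rewrite !mxE. Qed.

Lemma curve_D (R : realType) n r (H X : 'M[R]_(n, r)) :
  let c := fun s : R => (s *: H + X) *m (s *: H + X)^T in
  derivable c 0 1 /\ 'D_1 c 0 = H *m X^T + X *m H^T.
Proof.
move=> c.
set B := H *m X^T + X *m H^T.
have E : forall h : R, h != 0 ->
   h^-1 *: ((c \o shift 0) (h *: 1) - c 0) = B + h *: (H *m H^T).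
  move=> h h0; rewrite /c /shift /= [h *: 1]mulr1 addr0 scale0r add0r !trmx_lin.
  rewrite mulmxDl !mulmxDr -!scalemxAl -!scalemxAr scalerA.
  rewrite addrA addrK !scalerDr !scalerA mulrA mulVf // mul1r !scale1r /B.
  by rewrite [RHS]addrC addrA.
have L : (fun h : R => h^-1 *: ((c \o shift 0) (h *: 1) - c 0)) @ 0^' --> B.
  have G : (fun h : R => B + h *: (H *m H^T)) @ 0^' --> B.
    apply: cvg_within_filter.
    have := cvgD (cvg_cst B) (@scalel_continuous _ _ (H *m H^T) 0).
    rewrite scale0r addr0 => HH; exact: HH.
  apply: cvg_trans G; apply: near_eq_cvg.
  near=> h; apply/esym/E; near: h; exact: nbhs_dnbhs_neq.
split; first by apply/cvg_ex; exists B.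
exact: cvg_lim L.
Unshelve. all: by end_near.
Qed.

Lemma grad_min (R : realType) n (phi : 'M[R]_n -> R) Ms :
  (forall M, differentiable phi M) -> (forall M, phi Ms <= phi M) ->
  grad phi Ms = 0.
Proof.
move=> dphi hmin; apply/matrixP => i j; rewrite !mxE.
set v := delta_mx i j.
rewrite -[Ms]add0r -(scale0r v) D_line.
have H : is_derive (0:R) 1 (fun s : R => phi (s *: v + Ms)) 0.
  apply: (@derive1_at_min _ _ (-1) 1).
  - lra.
  - move=> t _; apply: derivable_line; exact: diff_derivable.
  - by rewrite in_itv /=; apply/andP; split; lra.
  - by move=> t _; rewrite scale0r add0r.
by rewrite derive_val.
Qed.

Lemma inner_subl (R : realType) m n (A B E : 'M[R]_(m, n)) :
  frob_inner A E - frob_inner B E = frob_inner (A - B) E.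
Proof.
rewrite !inner_sum -sumrB; apply: eq_bigr => i _; rewrite -sumrB.
by apply: eq_bigr => j _; rewrite !mxE; ring.
Qed.

Lemma descent (R : realType) n (phi : 'M[R]_n -> R) (L : R) :
  (forall M, differentiable phi M) ->
  (forall M E : 'M[R]_n, frob (grad phi (M + E) - grad phi M) <= L * frob E) ->
  forall M E : 'M[R]_n, phi (M + E) <= phi M + frob_inner (grad phi M) E + L / 2 * frob E ^+ 2.
Proof.
move=> dphi hlip M E.
set a := frob_inner (grad phi M) E.
set b := L / 2 * frob E ^+ 2.
set g := fun s : R => phi (s *: E + M).
have dg : forall s : R, is_derive s 1 g (frob_inner (grad phi (s *: E + M)) E).
  move=> s; have d1 : derivable g s 1.
    by apply: derivable_line; exact: diff_derivable.
  by have := derivableP d1; rewrite -D_line deriveE // -diff_inner.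
set k := g - (a \*: (@id R)) - (b \*: ((@id R) ^+ 2)).
have dk : forall s : R, is_derive s 1 k (frob_inner (grad phi (s *: E + M)) E - a - 2 * s * b).
  move=> s; rewrite /k; apply: is_derive_eq.
  rewrite [a%:A]mulr1 [(_ * _)%:A]mulr1 expr1.
  rewrite -[b *: _]/(b * (2 * s)); ring.
have kE : forall s, k s = phi (s *: E + M) - a * s - b * (s ^+ 2) by [].
have Hd : forall x : R, x \in `]0, 1[%R -> derivable k x 1 by move=> x _; exact: ex_derive.
have Hle : forall x : R, x \in `]0, 1[%R -> k^`() x <= 0.
  move=> x hx; have x0 : 0 < x by rewrite (itvP hx).
  rewrite derive1E derive_val /a inner_subl.
  have I1 := inner_le (grad phi (x *: E + M) - grad phi M) E.
  have I2 := hlip M (x *: E).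
  rewrite [M + _]addrC frobZ (ger0_norm (ltW x0)) in I2.
  have I3 := ler_wpM2r (frob_ge0 E) I2.
  rewrite /b; nra.
have Hc : {within `[0, 1], continuous k}.
  apply: continuous_subspaceT => x; apply: differentiable_continuous.
  by apply/derivable1_diffP; exact: ex_derive.
have := @ler0_derive1_nincr R k 0 1 Hd Hle Hc 0 1 (lexx 0) ler01 (lexx 1).
rewrite !kE scale1r scale0r add0r expr1n expr0n /= !mulr0 mulr1 !subr0 [M + E]addrC.
lra.
Qed.

Lemma trmx_sum2 (R : realType) n r m k (F : 'I_m -> 'I_k -> 'M[R]_(n, r)) :
  (\sum_i \sum_j F i j)^T = \sum_i \sum_j (F i j)^T.
Proof.
apply/matrixP => a b; rewrite mxE !summxE; apply: eq_bigr => i _.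
by rewrite !summxE; apply: eq_bigr => j _; rewrite mxE.
Qed.

Lemma sum_delta_lin (R : realType) n r (X W : 'M[R]_(n, r)) :
  W *m X^T + X *m W^T =
  \sum_i \sum_j W i j *: (delta_mx i j *m X^T + X *m (delta_mx i j)^T).
Proof.
rewrite [in LHS](matrix_sum_delta W) trmx_sum2 mulmx_suml mulmx_sumr -big_split /=.
apply: eq_bigr => i _; rewrite mulmx_suml mulmx_sumr -big_split /=.
apply: eq_bigr => j _.
have -> : (W i j *: delta_mx i j)^T = W i j *: (delta_mx i j)^T.
  by apply/matrixP => a b; rewrite !mxE.
by rewrite -scalemxAl -scalemxAr scalerDr.
Qed.

Lemma Df (R : realType) n r (phi : 'M[R]_n -> R)
  (dphi : forall M, differentiable phi M) (X H : 'M[R]_(n, r)) :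
  'D_H (fun Y : 'M[R]_(n, r) => phi (Y *m Y^T)) X =
  'd phi (X *m X^T) (H *m X^T + X *m H^T).
Proof.
have [dc Dc] := curve_D H X.
rewrite -[X in 'D_H _ X]add0r -(scale0r H) D_line.
set c := fun s : R => (s *: H + X) *m (s *: H + X)^T.
rewrite (_ : (fun s : R => phi ((s *: H + X) *m (s *: H + X)^T)) = phi \o c) //.
rewrite (chain_D dc (dphi _)).
by rewrite Dc /c scale0r add0r.
Qed.

Lemma grad_f (R : realType) n r (phi : 'M[R]_n -> R)
  (dphi : forall M, differentiable phi M) (X V : 'M[R]_(n, r)) :
  frob_inner (grad (fun Y : 'M[R]_(n, r) => phi (Y *m Y^T)) X) V =
  frob_inner (grad phi (X *m X^T)) (V *m X^T + X *m V^T).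
Proof.
rewrite [RHS]diff_inner // sum_delta_lin inner_sum linear_sum /=.
apply: eq_bigr => i _; rewrite linear_sum; apply: eq_bigr => j _ /=.
by rewrite linearZ /= mxE Df // mulrC.
Qed.

Lemma cont_sum (R : realType) (T : topologicalType) (I : finType) (F : I -> T -> R) :
  (forall i, continuous (F i)) -> continuous (fun x => \sum_i F i x).
Proof.
move=> hF.
have -> : (fun x => \sum_i F i x) = \sum_i F i.
  by apply: funext => x; rewrite fct_sumE.
apply: (big_ind (fun g : T -> R => continuous g)).
- by move=> x; exact: cvg_cst.
- by move=> f g hf hg x; apply: cvgD; [exact: hf | exact: hg].
- by move=> i _; exact: hF.
Qed.

Definition bq (R : realType) r (B : 'M[R]_r) (x y : 'rV[R]_r) : R := (x *m B *m y^T) 0 0.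

Lemma bqE (R : realType) r (B : 'M[R]_r) (x y : 'rV[R]_r) :
  bq B x y = \sum_k (\sum_l x 0 l * B l k) * y 0 k.
Proof.
rewrite /bq mxE; apply: eq_bigr => k _; rewrite !mxE; congr (_ * _).
Qed.

Lemma bq_cont (R : realType) r (B : 'M[R]_r) :
  continuous (fun x : 'rV[R]_r => bq B x x).
Proof.
have -> : (fun x : 'rV[R]_r => bq B x x) =
   (fun x => \sum_k (\sum_l x 0 l * B l k) * x 0 k).
  by apply: funext => x; rewrite bqE.
apply: cont_sum => k x; apply: continuousM; last exact: coord_continuous.
apply: cont_sum => l y; apply: continuousM; first exact: coord_continuous.
exact: cst_continuous.
Qed.

Lemma bqDl (R : realType) r (B : 'M[R]_r) x y z : bq B (x + y) z = bq B x z + bq B y z.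
Proof. by rewrite /bq !mulmxDl mxE. Qed.

Lemma bqZl (R : realType) r (B : 'M[R]_r) (a : R) x z : bq B (a *: x) z = a * bq B x z.
Proof. by rewrite /bq -!scalemxAl mxE. Qed.

Lemma bq_sym (R : realType) r (B : 'M[R]_r) x y : B^T = B -> bq B x y = bq B y x.
Proof.
move=> hB; rewrite /bq.
have -> : (x *m B *m y^T) 0 0 = ((x *m B *m y^T)^T) 0 0 by rewrite [RHS]mxE.
by rewrite !trmx_mul trmxK hB mulmxA.
Qed.

Lemma bqDr (R : realType) r (B : 'M[R]_r) x y z : B^T = B -> bq B x (y + z) = bq B x y + bq B x z.
Proof. by move=> hB; rewrite !(bq_sym x) // bqDl. Qed.

Lemma bqZr (R : realType) r (B : 'M[R]_r) (a : R) x z : B^T = B -> bq B x (a *: z) = a * bq B x z.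
Proof. by move=> hB; rewrite !(bq_sym x) // bqZl. Qed.

Lemma bq1E (R : realType) r (x : 'rV[R]_r) : bq 1%:M x x = \sum_k x 0 k ^+ 2.
Proof.
rewrite /bq mulmx1 mxE; apply: eq_bigr => k _; by rewrite mxE expr2.
Qed.

Lemma bqB (R : realType) r (A : 'M[R]_r) (m : R) x : bq (A - m%:M) x x = bq A x x - m * bq 1%:M x x.
Proof.
rewrite /bq mulmxBr mul_mx_scalar mulmxBl -scalemxAl mulmx1 mxE.
by congr (_ + _); rewrite !mxE.
Qed.

Lemma bq0 (R : realType) r (A : 'M[R]_r) : bq A 0 0 = 0.
Proof. by rewrite /bq !mul0mx mxE. Qed.

Lemma orth_from_psd (R : realType) r (B : 'M[R]_r) c :
  B^T = B -> (forall x, 0 <= bq B x x) -> bq B c c = 0 -> forall y, bq B c y = 0.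
Proof.
move=> hB hge hc y; set s := bq B c y; set k := bq B y y.
have hk : 0 <= k by exact: hge.
have hk1 : 0 < k + 1 by rewrite (le_lt_trans hk) // ltrDl ltr01.
set u := (k + 1)^-1.
have hu : 0 < u by rewrite invr_gt0.
have huk : u * k = 1 - u.
  by rewrite /u; field; rewrite gt_eqF.
set t := - s * u.
have := hge (c + t *: y).
rewrite bqDl !bqDr // !bqZl !bqZr // hc (bq_sym y) // -/s -/k.
move=> h.
have h2 : 0 <= s ^+ 2 * u * (- 1 - u).
  have -> : s ^+ 2 * u * (- 1 - u) = 0 + t * s + (t * s + t * (t * k)).
    rewrite /t; rewrite -[t * (t * k)]/(t * (t * k)).
    have -> : - s * u * (- s * u * k) = s ^+ 2 * u * (u * k) by ring.
    rewrite huk; ring.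
  exact: h.
have : s ^+ 2 * u * (1 + u) <= 0 by nra.
have hsu : 0 <= s ^+ 2 * u by rewrite mulr_ge0 // ?sqr_ge0 ?ltW.
move=> h3.
have : s ^+ 2 * u = 0 by nra.
move/eqP; rewrite mulf_eq0 (gt_eqF hu) orbF sqrf_eq0 => /eqP //.
Qed.

Lemma sq_le_sum (R : realType) r (x : 'rV[R]_r) j : x 0 j ^+ 2 <= \sum_k x 0 k ^+ 2.
Proof.
rewrite (bigD1 j) //= lerDl; apply: sumr_ge0 => k _; exact: sqr_ge0.
Qed.

Lemma rayleigh (R : realType) r (A : 'M[R]_r) (lam : R) :
  A^T = A -> is_lambda_min A lam ->
  forall x : 'rV[R]_r, lam * bq 1%:M x x <= bq A x x.
Proof.
case: r A => [|r] A hs [hev hmin] x.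
  by rewrite /bq !mxE !big_ord0 mulr0.
set q := fun x : 'rV[R]_r.+1 => bq 1%:M x x.
set p := fun x : 'rV[R]_r.+1 => bq A x x.
have q0 : forall x, 0 <= q x.
  by move=> y; rewrite /q bq1E; apply: sumr_ge0 => k _; exact: sqr_ge0.
set S := [set x : 'rV[R]_r.+1 | q x = 1].
have S0 : S !=set0.
  exists (delta_mx 0 0); rewrite /S /= /q bq1E (bigD1 ord0) //= mxE eqxx /=.
  rewrite expr1n big1 ?addr0 // => k k0; rewrite mxE.
  by rewrite (negbTE k0) andbF expr0n.
have Scomp : compact S.
  apply: bounded_closed_compact.
    exists 1; split; first by rewrite num_real.
    move=> M M1 y Sy.
    apply: (@le_trans _ _ 1); last exact: ltW.
    rewrite [leLHS]/Num.norm /= mx_normrE; apply: bigmax_le => //= ij _.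
    rewrite (ord1 ij.1); apply: abs_le_sq => //.
    rewrite expr1n -Sy /q bq1E; exact: sq_le_sum.
  have -> : S = q @^-1` [set 1] by [].
  apply: preimage_closed; last exact: closed_eq.
  by move=> y _; exact: bq_cont.
have [c cS cmin] := EVT_min_rV S0 Scomp (continuous_subspaceT (@bq_cont R r.+1 A)).
have cq : q c = 1 by move: cS; rewrite inE.
set m := p c.
have qZ : forall (a : R) y, q (a *: y) = a ^+ 2 * q y.
  by move=> a y; rewrite /q bqZl bqZr ?trmx1 // mulrA -expr2.
have pZ : forall (a : R) y, p (a *: y) = a ^+ 2 * p y.
  by move=> a y; rewrite /p bqZl bqZr // mulrA -expr2.
have pm : forall y, m * q y <= p y.
  move=> y; have [qy0|qypos] : q y = 0 \/ 0 < q y.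
    by have := q0 y; rewrite le_eqVlt => /orP[/eqP <-|->]; [left|right].
  - have y0 : y = 0.
      apply/matrixP => i j; rewrite (ord1 i) mxE.
      move: qy0; rewrite /q bq1E => /eqP; rewrite psumr_eq0; last first.
        by move=> k _; exact: sqr_ge0.
      by move=> /allP /(_ j (mem_index_enum _)) /=; rewrite sqrf_eq0 => /eqP.
    by rewrite qy0 mulr0 y0 /p bq0.
  - set s := Num.sqrt (q y).
    have s0 : 0 < s by rewrite sqrtr_gt0.
    have ss : s ^+ 2 = q y by rewrite sqr_sqrtr // ltW.
    have Sy : S (s^-1 *: y).
      by rewrite /S /= qZ exprVn ss mulVf // gt_eqF.
    have := cmin (s^-1 *: y); rewrite inE => /(_ Sy).
    move=> h0; have h : m <= p (s^-1 *: y) := h0.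
    rewrite pZ exprVn ss in h.
    have := ler_wpM2l (ltW qypos) h.
    by rewrite mulrA mulfV ?gt_eqF // mul1r mulrC.
set B := A - m%:M.
have Bsym : B^T = B.
  apply/matrixP => i j; rewrite !mxE eq_sym; congr (_ - _).
  by rewrite -{1}hs mxE.
have Bge : forall y, 0 <= bq B y y.
  by move=> y; rewrite bqB subr_ge0; exact: pm.
have Bc : bq B c c = 0 by rewrite bqB -/(p c) -/(q c) cq mulr1 subrr.
have orth := orth_from_psd Bsym Bge Bc.
have cB : c *m B = 0.
  apply/rowP => j; have := orth (delta_mx 0 j).
  by rewrite /bq trmx_delta -colE !mxE.
have ev : eigenvalue A m.
  apply/eigenvalueP; exists c.
    by move: cB; rewrite mulmxBr mul_mx_scalar => /eqP; rewrite subr_eq0 => /eqP.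
  apply/eqP => c0; move: cq; rewrite c0 /q bq0 => /eqP; rewrite eq_sym oner_eq0.
  done.
have lm := hmin m ev.
apply: (le_trans _ (pm x)); rewrite -/(q x) ler_wpM2r //; exact: q0.
Qed.

Lemma inner_addr (R : realType) m n (G P Q : 'M[R]_(m, n)) :
  frob_inner G (P + Q) = frob_inner G P + frob_inner G Q.
Proof.
rewrite !inner_sum -big_split; apply: eq_bigr => i _; rewrite -big_split.
by apply: eq_bigr => j _; rewrite !mxE mulrDr.
Qed.

Lemma fs_rows (R : realType) m n (W : 'M[R]_(m, n)) :
  fs W = \sum_i bq 1%:M (row i W) (row i W).
Proof.
rewrite /fs; apply: eq_bigr => i _; rewrite bq1E; apply: eq_bigr => j _.
by rewrite mxE.
Qed.

Lemma bq_gram (R : realType) n r (X : 'M[R]_(n, r)) (v : 'rV[R]_r) :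
  bq (X^T *m X) v v = bq 1%:M (v *m X^T) (v *m X^T).
Proof.
by rewrite /bq mulmx1 trmx_mul trmxK !mulmxA.
Qed.

Lemma fs_lower (R : realType) n r (X : 'M[R]_(n, r)) (V : 'M[R]_(n, r)) lam :
  is_lambda_min (X^T *m X) lam -> lam * fs V <= fs (V *m X^T).
Proof.
move=> hl; rewrite !fs_rows mulr_sumr; apply: ler_sum => i _.
rewrite row_mul -bq_gram; apply: rayleigh hl _.
by rewrite trmx_mul trmxK.
Qed.

Lemma nV_sq (R : realType) n r (X V : 'M[R]_(n, r)) (S : 'M[R]_r) (eta : R) :
  S^T = S -> S *m S = X^T *m X + eta%:M ->
  frob (V *m S) ^+ 2 = fs (V *m X^T) + eta * fs V.
Proof.
move=> hS hSS; rewrite frob_sq !fs_trace !trmx_mul hS trmxK.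
rewrite -mulmxA [S *m (S *m V^T)]mulmxA hSS mulmxDl mulmxDr mxtraceD !mulmxA.
by rewrite mul_mx_scalar -scalemxAl mxtraceZ.
Qed.

Lemma frob_n0 (R : realType) n k (W : 'M[R]_(n, k)) : n = 0%N -> frob W = 0.
Proof.
by move=> n0; move: W; rewrite n0 => W; rewrite /frob big_ord0 sqrtr0.
Qed.

Lemma frob_delta_pos (R : realType) n (i : 'I_n) : 0 < frob (delta_mx i i : 'M[R]_n).
Proof.
rewrite /frob sqrtr_gt0; apply: (@lt_le_trans _ _ ((delta_mx i i : 'M[R]_n) i i ^+ 2)).
  by rewrite mxE !eqxx /= expr1n ltr01.
rewrite (bigD1 i) //= (bigD1 i) //= -addrA lerDl.
apply: addr_ge0; first by apply: sumr_ge0 => j _; exact: sqr_ge0.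
by apply: sumr_ge0 => k _; apply: sumr_ge0 => j _; exact: sqr_ge0.
Qed.

Unset Implicit Arguments. Set Strict Implicit.
Local Close Scope classical_set_scope.

Theorem lemma22 (R : realType) (n r : nat) (phi : 'M[R]_n -> R) (L : R)
  (Mstar : 'M[R]_n)
  (Hdiff : forall M : 'M[R]_n, differentiable phi M)
  (Hlip : forall M E : 'M[R]_n,
     frob (grad phi (M + E) - grad phi M) <= L * frob E)
  (Hmin : forall M : 'M[R]_n, phi Mstar <= phi M)
  (Hpsd : psd Mstar)
  (X V : 'M[R]_(n, r)) (eta lam : R) (S : 'M[R]_r)
  (Heta : 0 <= eta)
  (Hlam : is_lambda_min (X^T *m X) lam)
  (Hpos : 0 < lam + eta)
  (HSpsd : psd S) (HS : S *m S = X^T *m X + eta%:M) :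
  let f := fun Y : 'M[R]_(n, r) => phi (Y *m Y^T) in
  let nV := frob (V *m S) in
  let ell := L * (4 + (2 * frob (X *m X^T - Mstar) + 4 * nV) / (lam + eta)
                    + (nV / (lam + eta)) ^+ 2) in
  f (X + V) <= f X + frob_inner (grad f X) V + ell / 2 * nV ^+ 2.
Proof.
cbv zeta beta.
set nV := frob (V *m S).
set ell := L * (4 + (2 * frob (X *m X^T - Mstar) + 4 * nV) / (lam + eta)
                    + (nV / (lam + eta)) ^+ 2).
set M := X *m X^T.
set P := V *m X^T + X *m V^T.
set Q := V *m V^T.
have eqXV : (X + V) *m (X + V)^T = M + (P + Q).
  have -> : (X + V)^T = X^T + V^T by apply/matrixP => i j; rewrite !mxE.
  rewrite mulmxDl !mulmxDr /M /P /Q.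
  by rewrite -!addrA; congr (_ + _); rewrite addrCA.
have hdes := descent Hdiff Hlip M (P + Q).
rewrite -eqXV inner_addr /P -grad_f // -/P in hdes.
set G := grad phi M.
set D := frob (M - Mstar).
have hG : frob G <= L * D.
  have := Hlip Mstar (M - Mstar); rewrite [Mstar + _]addrC subrK.
  by rewrite (grad_min Hdiff Hmin) subr0.
have hGQ := inner_le G Q.
have hfq : frob Q <= frob V ^+ 2.
  by have := frob_mul V V^T; rewrite frob_tr -expr2.
set w := frob (V *m X^T).
have hE : frob (P + Q) <= 2 * w + frob Q.
  apply: (le_trans (frob_add _ _)); rewrite lerD2r.
  apply: (le_trans (frob_add _ _)).
  have -> : X *m V^T = (V *m X^T)^T by rewrite trmx_mul trmxK.
  by rewrite frob_tr -/w; lra.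
set c := lam + eta.
set a := nV.
have ha : 0 <= a by exact: frob_ge0.
have hn2 : a ^+ 2 = fs (V *m X^T) + eta * fs V.
  by rewrite /a /nV (@nV_sq _ _ _ X V S eta) //; case: HSpsd.
have hlow := fs_lower V Hlam.
have hfsV : fs V * c <= a ^+ 2 by rewrite hn2 /c; lra.
have hw : w <= a.
  have hw2 : w ^+ 2 <= a ^+ 2.
    rewrite /w frob_sq hn2; have := fs_ge0 V; nra.
  apply: le_trans (ler_norm w) _; exact: abs_le_sq.
set b := a ^+ 2 / c.
have hb : frob Q <= b.
  apply: (le_trans hfq); rewrite frob_sq /b ler_pdivlMr //.
have hq0 := frob_ge0 Q.
have T1 : frob_inner G Q <= L * D * b.
  apply: (le_trans hGQ); apply: ler_pM; [exact: frob_ge0 | exact: hq0 | exact: hG | exact: hb].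
have hE2 : frob (P + Q) <= 2 * a + b by lra.
have T2 : L / 2 * frob (P + Q) ^+ 2 <= L / 2 * (2 * a + b) ^+ 2.
  have [n0|npos] : n = 0%N \/ (0 < n)%N by case: n {Hdiff Hlip Hmin Hpsd X V HS Hlam hdes M P Q eqXV G D hG hGQ hfq w hE ha hn2 hlow hfsV hw b hb hq0 T1 hE2 nV ell a Mstar phi} => [|n]; [left|right].
  - have hb0 : b = 0 by rewrite /b /a /nV (frob_n0 _ n0) expr0n mul0r.
    rewrite (frob_n0 (P + Q) n0) hb0 /a /nV (frob_n0 (V *m S) n0) !expr2; lra.
  - have hL : 0 <= L.
      have := Hlip 0 (delta_mx (Ordinal npos) (Ordinal npos)).
      have := frob_delta_pos R (Ordinal npos).
      have := frob_ge0 (grad phi (0 + delta_mx (Ordinal npos) (Ordinal npos)) - grad phi 0).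
      nra.
    apply: ler_wpM2l; first lra.
    apply: ler_pM => //; exact: frob_ge0.
have Eell : ell / 2 * a ^+ 2 = L * D * b + L / 2 * (2 * a + b) ^+ 2.
  rewrite /ell /b -/a -/c -/D; field.
  by rewrite /c gt_eqF.
rewrite -/a Eell; lra.
Qed.
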